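(* Let $G$ be a finite group acting on $X=G$ by left multiplication, so that $\mathbb{C}X=\mathbb{C}G$ is the regular module. Let $\{1\}=G_1<\cdots<G_n=G$ be a chain of subgroups with $\mathcal{R}(G_1),\dots,\mathcal{R}(G_n)$ compatible with respect to $\mathbb{C}X$, and let $\mathcal{B}_1,\dots,\mathcal{B}_n$ be as in the standing setup below. Put $q_j=[G_j:G_{j-1}]$. Then for every $f\in\mathbb{C}G$, $[f]_{\mathcal{B}_n}$ can be computed from $[f]_{\mathcal{B}_1}$ (by successively multiplying by $C(\mathcal{B}_2,\mathcal{B}_1),\dots,C(\mathcal{B}_n,\mathcal{B}_{n-1})$, using only their nonzero entries) with strictly fewer than \[2\sum_{j=2}^n q_j^2\,q_{j+1}\cdots q_n\,d^3(G_{j-1})\] complex arithmetic operations (additions and multiplications).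
   Context: For a finite group $H$ with irreducible complex representations of dimensions $d_1,\dots,d_s$, $d^3(H)=d_1^3+\cdots+d_s^3$. For a finite group $G$, $\mathcal{R}(G)$ denotes a fixed complete set of pairwise inequivalent irreducible complex matrix representations of $G$. For a finite-dimensional $\mathbb{C}G$-module $M$ with ordered basis $\mathcal{B}$, $[g]_{\mathcal{B}}$ denotes the matrix of the action of $g$ with respect to $\mathcal{B}$; $\mathcal{B}$ is a symmetry adapted basis of $M$ with respect to $\mathcal{R}(G)$ if there is a fixed partition of the positions into consecutive blocks such that for every $g\in G$, $[g]_{\mathcal{B}}$ is block diagonal with respect to these blocks and each block equals $\rho(g)$ for some $\rho\in\mathcal{R}(G)$ depending only on the block. Standing setup: $G$ acts on a finite set $X$; $\mathbb{C}X$ is the space of functions $X\to\mathbb{C}$ with $(g\cdot f)(x)=f(g^{-1}x)$, each $x\in X$ is identified with its indicator function, and the standard basis of $\mathbb{C}X$ is $X$ itself; for a union $Y$ of orbits of a subgroup, $\mathbb{C}Y$ is regarded as a submodule of $\mathbb{C}X$. The sets $\mathcal{R}(G_1),\dots,\mathcal{R}(G_n)$ are compatible with respect to $\mathbb{C}X$ if some basis of $\mathbb{C}X$ is symmetry adapted with respect to $\mathcal{R}(G_i)$ (for $\mathbb{C}X$ restricted to $G_i$) for every $i$. For $1\le j\le n$, $\mathcal{B}_j$ is an orbital symmetry adapted basis with respect to $\mathcal{R}(G_1),\dots,\mathcal{R}(G_j)$: the disjoint union, over the $G_j$-orbits $Y\subseteq X$, of bases of $\mathbb{C}Y$ each symmetry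 adapted with respect to $\mathcal{R}(G_i)$ for every $i\le j$; $\mathcal{B}_1$ is the standard basis. For bases $\mathcal{B},\mathcal{B}'$, $[v]_{\mathcal{B}}$ is the coordinate vector and $C(\mathcal{B},\mathcal{B}')$ is the matrix with $C(\mathcal{B},\mathcal{B}')[v]_{\mathcal{B}'}=[v]_{\mathcal{B}}$. *)

(* Defs.v *)
From HB Require Import structures.
From mathcomp Require Import all_boot all_order all_algebra all_fingroup all_solvable all_field all_character.
Set Implicit Arguments. Unset Strict Implicit. Unset Printing Implicit Defensive.
Import Order.TTheory GRing.Theory Num.Theory.
Local Open Scope ring_scope.

Record rep_family (gT : finGroupType) (H : {group gT}) := RepFamily {
  rf_num : nat;
  rf_dim : 'I_rf_num -> nat;
  rf_rep : forall i : 'I_rf_num, mx_representation algC H (rf_dim i) }.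
Arguments rf_num {gT H} r.
Arguments rf_dim {gT H} r i.
Arguments rf_rep {gT H} r i.

Definition complete_irr_set (gT : finGroupType) (H : {group gT})
    (R : rep_family H) : Prop :=
  [/\ forall i, mx_irreducible (rf_rep R i),
      forall i j, i != j -> ~ mx_rsim (rf_rep R i) (rf_rep R j)
    & forall (m : nat) (rG : mx_representation algC H m),
        mx_irreducible rG -> exists i, mx_rsim (rf_rep R i) rG].

Definition d3 (gT : finGroupType) (H : {group gT}) (R : rep_family H) : nat :=
  (\sum_(i < rf_num R) rf_dim R i ^ 3)%N.

(* entry (a,b) of a square matrix, with natural-number indices (0 outside) *)
Definition nat_entry (d : nat) (M : 'M[algC]_d) (a b : nat) : algC :=
  match insub a, insub b with
  | Some i, Some j => M i j
  | _, _ => 0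
  end.

Definition blk_start (gT : finGroupType) (H : {group gT}) (R : rep_family H)
    (s : seq 'I_(rf_num R)) (k : nat) : nat :=
  (\sum_(t <- take k s) rf_dim R t)%N.
Arguments blk_start {gT H} R s k.

(* the block-diagonal matrix with consecutive diagonal blocks
   rho_{s_0}(h), rho_{s_1}(h), ..., as a function of natural indices *)
Definition blockdiag_entry (gT : finGroupType) (H : {group gT}) (R : rep_family H)
    (s : seq 'I_(rf_num R)) (h : gT) (a b : nat) : algC :=
  \sum_(k < size s)
    if (blk_start R s k <= a < blk_start R s k.+1)%N &&
       (blk_start R s k <= b < blk_start R s k.+1)%N
    then nat_entry (rf_rep R (tnth (in_tuple s) k) h)
                   (a - blk_start R s k) (b - blk_start R s k)
    else 0.
Arguments blockdiag_entry {gT H} R s h a b.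

(* X = gT (the whole group), with positions indexed by 'I_#|gT| via enum_val.
   Vectors of CX are column vectors 'cV_#|gT|; the standard basis vector e_i is
   the indicator of enum_val i.  The action of g sends the indicator of x to
   the indicator of g x, giving the matrix perm_act g. *)
Definition perm_act (gT : finGroupType) (g : gT) : 'M[algC]_#|{: gT}| :=
  \matrix_(i, j) ((enum_val i == g * enum_val j)%g)%:R.

(* The list of vectors b_0..b_{m-1} (spanning an H-stable subspace M, linearly
   independent) is a symmetry adapted basis of M with respect to R(H):
   there are consecutive blocks (given by the list s of representations of R)
   such that for every h in H the matrix [h]_b is block diagonal with the
   block k equal to rho_{s_k}(h).  [h]_b is characterised by
   h . b_k = \sum_l [h]_b(l,k) b_l. *)
Definition sym_adapted (gT : finGroupType) (H : {group gT}) (R : rep_family H)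
    (m : nat) (b : 'I_m -> 'cV[algC]_#|{: gT}|) : Prop :=
  exists s : seq 'I_(rf_num R),
    (\sum_(t <- s) rf_dim R t)%N = m /\
    forall h, h \in H -> forall k : 'I_m,
      perm_act h *m b k = \sum_(l < m) blockdiag_entry R s h l k *: b l.

(* column k of B lies in C(Y) for the G_j-orbit Y = G_j x *)
Definition col_in (gT : finGroupType) (Y : {set gT})
    (B : 'M[algC]_#|{: gT}|) (k : 'I_#|{: gT}|) : bool :=
  [forall i, (B i k != 0) ==> (enum_val i \in Y)].

(* B (columns = basis vectors) is an orbital symmetry adapted basis with respect
   to R(G_1), ..., R(G_j): it is a basis of CX, each basis vector lies in C(Y)
   for some G_j-orbit Y, and for each G_j-orbit Y the basis vectors lying in
   C(Y), in their induced order, form a basis of C(Y) that is symmetry adapted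
   with respect to R(G_i) for every 1 <= i <= j. *)
Definition orbital_sa (gT : finGroupType) (Gs : nat -> {group gT})
    (Rs : forall i, rep_family (Gs i)) (j : nat) (B : 'M[algC]_#|{: gT}|) : Prop :=
  [/\ B \in unitmx,
      forall k, exists x : gT, col_in ((Gs j) :* x)%g B k
    & forall x : gT,
        let K := [set k | col_in ((Gs j) :* x)%g B k] in
        forall i, (1 <= i <= j)%N ->
          sym_adapted (Rs i) (fun l : 'I_#|K| => col (enum_val l) B)].

(* The change of basis matrix C(B, B'), with C(B,B') [v]_B' = [v]_B,
   when basis vectors are the columns of B and B'. *)
Definition change_basis (N : nat) (B B' : 'M[algC]_N) : 'M[algC]_N :=
  invmx B *m B'.

(* number of complex arithmetic operations used to compute C *m v using only
   the nonzero entries of C: one multiplication per nonzero entry, and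
   (number of nonzero entries - 1) additions in each row with nonzero entries *)
Definition nnz_row (N : nat) (C : 'M[algC]_N) (i : 'I_N) : nat :=
  #|[set j | C i j != 0]|.
Definition sparse_mv_cost (N : nat) (C : 'M[algC]_N) : nat :=
  (\sum_i (nnz_row C i + (nnz_row C i).-1))%N.

(* Main.v *)
Require Import Defs.
From HB Require Import structures.
From mathcomp Require Import all_boot all_order all_algebra all_fingroup all_solvable all_field all_character.
From mathcomp Require Import ring zify.
Import Order.TTheory GRing.Theory Num.Theory.
Set Implicit Arguments. Unset Strict Implicit. Unset Printing Implicit Defensive.

Lemma nat_entry_ord d (M : 'M[algC]_d) (i j : 'I_d) : nat_entry M i j = M i j.
Proof. by rewrite /nat_entry !valK. Qed.

Section Blocks.
Variables (gT : finGroupType) (H : {group gT}) (R : rep_family H)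
  (s : seq 'I_(rf_num R)).

Local Notation st := (blk_start R s).
Local Notation dd p := (rf_dim R (tnth (in_tuple s) p)).

Lemma st_sumn k : st k = sumn (take k (map (rf_dim R) s)).
Proof. by rewrite /blk_start -map_take sumnE big_map. Qed.

Lemma st_mono a b : a <= b -> st a <= st b.
Proof.
move=> ab; rewrite !st_sumn -(subnKC ab) takeD sumn_cat; exact: leq_addr.
Qed.

Lemma stS (p : 'I_(size s)) : st p.+1 = st p + dd p.
Proof.
rewrite /blk_start (take_nth (tnth (in_tuple s) p)) //.
by rewrite -cats1 big_cat big_seq1 /= [in RHS](tnth_nth (tnth (in_tuple s) p)).
Qed.

Lemma st_size : st (size s) = (\sum_(t <- s) rf_dim R t)%N.
Proof. by rewrite /blk_start take_size. Qed.

Lemma blk_uniq k k' a : st k <= a < st k.+1 -> st k' <= a < st k'.+1 -> k = k'.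
Proof.
move=> /andP[h1 h2] /andP[h3 h4]; case: (ltngtP k k') => // hk.
  by have := st_mono hk; rewrite leqNgt (leq_ltn_trans h3 h2).
by have := st_mono hk; rewrite leqNgt (leq_ltn_trans h1 h4).
Qed.

Lemma bd_blocks h (p p' : 'I_(size s)) al t : al < dd p -> t < dd p' ->
  blockdiag_entry R s h (st p + al) (st p' + t) =
  if p == p' then nat_entry (rf_rep R (tnth (in_tuple s) p) h) al t else 0%R.
Proof.
move=> hal ht; rewrite /blockdiag_entry (bigD1 p) //= big1 ?GRing.addr0; last first.
  move=> k nkp; case: ifP => // /andP[hk _]; case/negP: nkp; apply/eqP/val_inj => /=.
  apply: (blk_uniq hk); by rewrite leq_addr stS ltn_add2l.
have hp : st p <= st p + al < st p.+1 by rewrite leq_addr stS ltn_add2l.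
rewrite hp /=; case: eqP => [e|npp].
  subst p'; by rewrite leq_addr stS ltn_add2l ht !addKn.
case: ifP => // hb; case: npp; apply/val_inj => /=; apply: (blk_uniq hb).
by rewrite leq_addr stS ltn_add2l.
Qed.

Lemma sum_blocks (V : Type) (idx : V) (op : Monoid.com_law idx) (F : nat -> V) :
  \big[op/idx]_(c < st (size s)) F c =
  \big[op/idx]_(p < size s) \big[op/idx]_(t < dd p) F (st p + t).
Proof.
have gen : forall k, k <= size s -> \big[op/idx]_(c < st k) F c =
  \big[op/idx]_(p < k) \big[op/idx]_(t < nth 0 (map (rf_dim R) s) p) F (st p + t).
  elim=> [|k IH] hk; first by rewrite /blk_start take0 big_nil !big_ord0.
  have hk' : k < size s by [].
  have e : st k.+1 = st k + nth 0 (map (rf_dim R) s) k.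
    rewrite (stS (Ordinal hk')) /=.
    by rewrite (tnth_nth (tnth (in_tuple s) (Ordinal hk'))) (nth_map (tnth (in_tuple s) (Ordinal hk'))).
  rewrite e big_split_ord big_ord_recr /=.
  rewrite (IH (ltnW hk')).
  by [].
rewrite gen //; apply: eq_bigr => p _.
by rewrite (nth_map (tnth (in_tuple s) p)) // [in RHS](tnth_nth (tnth (in_tuple s) p)).
Qed.

Lemma trace_blocks h :
  (\sum_(a < st (size s)) blockdiag_entry R s h a a =
  \sum_(p < size s) \tr (rf_rep R (tnth (in_tuple s) p) h))%R.
Proof.
rewrite (@sum_blocks _ 0%R +%R (fun a => blockdiag_entry R s h a a)); apply: eq_bigr => p _; rewrite /mxtrace.
apply: eq_bigr => t _; by rewrite bd_blocks // eqxx nat_entry_ord.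
Qed.

Lemma st_lt (p : 'I_(size s)) i : i < dd p -> st p + i < st (size s).
Proof.
move=> hi; apply: (leq_trans _ (st_mono (ltn_ord p))).
by rewrite stS ltn_add2l.
Qed.

Lemma row_block h (p : 'I_(size s)) i (F : nat -> algC) : i < dd p ->
  (\sum_(c < st (size s)) blockdiag_entry R s h (st p + i) c * F c =
   \sum_(t < dd p) nat_entry (rf_rep R (tnth (in_tuple s) p) h) i t * F (st p + t))%R.
Proof.
move=> hi; rewrite (@sum_blocks _ 0%R +%R (fun c => blockdiag_entry R s h (st p + i) c * F c)%R).
rewrite (bigD1 p) //= [X in (_ + X)%R]big1 ?GRing.addr0.
  by apply: eq_bigr => t _; rewrite bd_blocks // eqxx.
move=> p' np; apply: big1 => t _; rewrite bd_blocks //.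
by rewrite eq_sym (negbTE np) GRing.mul0r.
Qed.

Lemma col_block h (q : 'I_(size s)) j (F : nat -> algC) : j < dd q ->
  (\sum_(c < st (size s)) F c * blockdiag_entry R s h c (st q + j) =
   \sum_(t < dd q) F (st q + t) * nat_entry (rf_rep R (tnth (in_tuple s) q) h) t j)%R.
Proof.
move=> hj; rewrite (@sum_blocks _ 0%R +%R (fun c => F c * blockdiag_entry R s h c (st q + j))%R).
rewrite (bigD1 q) //= [X in (_ + X)%R]big1 ?GRing.addr0.
  by apply: eq_bigr => t _; rewrite bd_blocks // eqxx.
move=> p' np; apply: big1 => t _; rewrite bd_blocks //.
by rewrite (negbTE np) GRing.mulr0.
Qed.

Lemma blk_exists a : a < st (size s) ->
  exists p : 'I_(size s), exists2 al, al < dd p & a = st p + al.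
Proof.
move=> ha.
have h1 : 0 < \sum_(c < st (size s)) (val c == a : nat).
  by rewrite (bigD1 (Ordinal ha)) //= eqxx.
rewrite (@sum_blocks _ 0 addn (fun c => (c == a : nat))) in h1.
case: (boolP [exists p : 'I_(size s), [exists t : 'I_(dd p), st p + t == a]]).
  case/existsP => p /existsP [t /eqP e]; exists p; exists t => //.
rewrite negb_exists => /forallP hn.
suff : \sum_(p < size s) \sum_(t < dd p) (st p + t == a : nat) = 0 by move=> e; rewrite e in h1.
apply: big1 => p _; apply: big1 => t _.
by have := hn p; rewrite negb_exists => /forallP /(_ t) /negbTE ->.
Qed.

End Blocks.

Lemma col_inP (gT : finGroupType) (Y : {set gT}) (B : 'M[algC]_#|{: gT}|) k :
  reflect (forall i, B i k != 0%R -> enum_val i \in Y) (col_in Y B k).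
Proof.
apply: (iffP forallP) => [h i nz| h i]; first by have := h i; rewrite nz.
by apply/implyP => /h.
Qed.

Lemma irr_orth (gT : finGroupType) (H : {group gT}) (R : rep_family H) :
  complete_irr_set R -> forall t i,
  '[cfRepr (rf_rep R t), cfRepr (rf_rep R i)]%R = (t == i)%:R%R.
Proof.
case=> irrR inR _ t i.
have inirr : forall u, cfRepr (rf_rep R u) \in irr H.
  by move=> u; apply/irr_reprP; exists (Representation (rf_rep R u)); [exact: irrR|].
have [a ea] := irrP (inirr t); have [b eb] := irrP (inirr i).
rewrite ea eb cfdot_irr; suff -> : (a == b) = (t == i) by [].
case: (eqVneq t i) => [e|nti].
  subst; apply/eqP; apply: (@irr_inj _ H); by rewrite -ea -eb.
apply/negP => /eqP eab; apply: (inR _ _ nti); apply/cfRepr_rsimP.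
by rewrite ea eb eab.
Qed.

Lemma eq_mul_self (gT : finGroupType) (x h : gT) : (x == h * x)%g = (h == 1%g).
Proof. by rewrite -{1}(mul1g x) (inj_eq (mulIg x)) eq_sym. Qed.

Section Orbit.
Local Open Scope ring_scope.
Variables (gT : finGroupType) (B : 'M[algC]_#|{: gT}|) (G : {group gT}) (x0 : gT).
Hypotheses (uB : B \in unitmx) (hB : forall k, exists x, col_in (G :* x)%g B k).
Local Notation W := (G :* x0)%g.
Local Notation K := [set k | col_in W B k].
Local Notation iB := (invmx B).

Lemma outside k y : k \notin K -> B y k != 0 -> enum_val y \notin W.
Proof.
rewrite inE => nK nz; apply/negP => yW; case/negP: nK.
have [x cx] := hB k; have yx := col_inP _ _ _ cx y nz.
by have <- : (G :* x)%g = W by rewrite -(rcoset_eqP yx) (rcoset_eqP yW).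
Qed.

Lemma proj y y' : \sum_(k in K) B y k * iB k y' = ((y == y') && (enum_val y \in W))%:R.
Proof.
have e : (B *m iB) y y' = (y == y')%:R by rewrite mulmxV // mxE.
rewrite mxE in e.
case yW : (enum_val y \in W); last first.
  rewrite andbF big1 // => k; rewrite inE => /col_inP hk.
  case: (eqVneq (B y k) 0) => [->|nz]; first by rewrite mul0r.
  by have := hk y nz; rewrite yW.
rewrite andbT -e [RHS](bigID (fun k => k \in K)) /= [X in _ = _ + X]big1 ?addr0 //.
move=> k nK; case: (eqVneq (B y k) 0) => [->|nz]; first by rewrite mul0r.
by have := outside nK nz; rewrite yW.
Qed.

Lemma iB_out k y : k \in K -> enum_val y \notin W -> iB k y = 0.
Proof.
move=> kK yW.
have e1 : \sum_y1 iB k y1 * (\sum_(k' in K) B y1 k' * iB k' y) = 0.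
  rewrite big1 // => y1 _; rewrite proj.
  case: (eqVneq y1 y) => [->|]; last by rewrite mulr0.
  by rewrite (negbTE yW) mulr0.
rewrite -e1.
transitivity (\sum_(k' in K) (iB *m B) k k' * iB k' y).
  rewrite (bigD1 k) //= mulVmx // mxE eqxx mulr1n mul1r big1 ?addr0 //.
  by move=> k' /andP[_ nk]; rewrite mxE eq_sym (negbTE nk) mulr0n mul0r.
under [RHS]eq_bigr do rewrite big_distrr /=.
rewrite [RHS]exchange_big /=; apply: eq_bigr => k' _.
rewrite mxE big_distrl /=; apply: eq_bigr => y1 _; by rewrite mulrA.
Qed.

Lemma extract (al : 'I_#|K| -> algC) a :
  (iB *m \sum_(l < #|K|) al l *: col (enum_val l) B) (enum_val a) 0 = al a.
Proof.
rewrite mulmx_sumr summxE (bigD1 a) //= big1 ?addr0.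
  by rewrite -scalemxAr colE mulKmx // !mxE !eqxx mulr1.
move=> l nla; rewrite -scalemxAr colE mulKmx // !mxE.
by rewrite (inj_eq enum_val_inj) eq_sym (negbTE nla) mulr0.
Qed.

Lemma expand (v : 'cV[algC]_#|{: gT}|) :
  (forall y, v y 0 != 0 -> enum_val y \in W) ->
  v = \sum_(c < #|K|) (iB *m v) (enum_val c) 0 *: col (enum_val c) B.
Proof.
move=> sv; apply/matrixP => z o; rewrite (ord1 o) summxE.
transitivity (\sum_w v w 0 * ((z == w) && (enum_val z \in W))%:R).
  rewrite (bigD1 z) //= big1 ?addr0 => [|w nwz]; last by rewrite eq_sym (negbTE nwz) mulr0.
  rewrite eqxx /=; case: (eqVneq (v z 0) 0) => [->|nz]; first by rewrite mul0r.
  by rewrite (sv _ nz) mulr1.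
under eq_bigr do rewrite -proj big_distrr.
rewrite exchange_big /= big_enum_val; apply: eq_bigr => c _.
rewrite !mxE big_distrl /=; apply: eq_bigr => w _; ring.
Qed.

Variables (H : {group gT}) (R : rep_family H) (s : seq 'I_(rf_num R)).
Hypothesis hs : (\sum_(t <- s) rf_dim R t)%N = #|K|.
Hypothesis hsa : forall h, h \in H -> forall k : 'I_#|K|,
  perm_act h *m col (enum_val k) B =
  \sum_(l < #|K|) blockdiag_entry R s h l k *: col (enum_val l) B.

Lemma coef h (hH : h \in H) (a b : 'I_#|K|) :
  blockdiag_entry R s h a b =
  \sum_y iB (enum_val a) y * (perm_act h *m col (enum_val b) B) y 0.
Proof.
have := congr1 (fun v => (iB *m v) (enum_val a) 0) (hsa hH b) => /= e.
rewrite [RHS](_ : _ = (iB *m (perm_act h *m col (enum_val b) B)) (enum_val a) 0); last by rewrite mxE.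
rewrite e mulmx_sumr summxE (bigD1 a) //= big1 ?addr0.
  by rewrite -scalemxAr colE mulKmx // !mxE !eqxx mulr1.
move=> l nla; rewrite -scalemxAr colE mulKmx // !mxE.
by rewrite (inj_eq enum_val_inj) eq_sym (negbTE nla) mulr0.
Qed.

Lemma sum_W : \sum_(y : 'I_#|{: gT}|) (enum_val y \in W)%:R = #|W|%:R :> algC.
Proof.
rewrite -(big_enum_val (fun x : gT => (x \in W)%:R : algC)) /=.
rewrite -sum1_card natr_sum [RHS]big_mkcond /=; apply: eq_bigr => x _.
by case: (x \in W).
Qed.

Lemma trace_K h (hH : h \in H) :
  \sum_(a < #|K|) blockdiag_entry R s h a a = (#|W| * (h == 1%g))%:R.
Proof.
under eq_bigr do rewrite coef //.
transitivity (\sum_y \sum_z perm_act h y z * \sum_(k in K) B z k * iB k y).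
  rewrite exchange_big; apply: eq_bigr => y _.
  under eq_bigr do rewrite mxE big_distrr.
  rewrite exchange_big; apply: eq_bigr => z _.
  rewrite [in RHS]big_enum_val big_distrr; apply: eq_bigr => a _.
  rewrite !mxE /=; ring.
under eq_bigr do under eq_bigr do rewrite proj.
transitivity (\sum_(y : 'I_#|{: gT}|) (h == 1%g)%:R * (enum_val y \in W)%:R : algC).
  apply: eq_bigr => y _; rewrite (bigD1 y) //= big1 ?addr0.
    by rewrite eqxx /= mxE eq_mul_self.
  by move=> z nzy; rewrite (negbTE nzy) mulr0.
by rewrite -big_distrr /= sum_W natrM mulrC.
Qed.

Lemma count_K (cR : complete_irr_set R) i :
  (count_mem i s * #|H| = rf_dim R i * #|G|)%N.
Proof.
pose phi : 'CF(H) := \sum_(p < size s) cfRepr (rf_rep R (tnth (in_tuple s) p)).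
have phiE : forall h, h \in H -> phi h = (#|G| * (h == 1%g))%:R.
  move=> h hH; rewrite sum_cfunE.
  under eq_bigr do rewrite cfunE hH mulr1n.
  rewrite -trace_blocks -(card_rcoset G x0) -trace_K //.
  by rewrite st_size hs.
have e1 : '[phi, cfRepr (rf_rep R i)] = (count_mem i s)%:R.
  rewrite cfdot_suml.
  under eq_bigr do rewrite irr_orth //.
  have := big_tnth 0 +%R s xpredT (fun t => (t == i)%:R : algC).
  move=> /= <-; rewrite -natr_sum -sum1_count; congr (_%:R).
  rewrite [RHS]big_mkcond /=; apply: eq_bigr => t _; by case: (t == i).
have e2 : '[phi, cfRepr (rf_rep R i)] = #|H|%:R^-1 * (#|G|%:R * (rf_dim R i)%:R).
  rewrite cfdotE (bigD1 1%g) ?group1 //= big1 ?addr0.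
    by rewrite phiE ?group1 // eqxx muln1 cfRepr1 conjC_nat.
  by move=> h /andP[hH nh]; rewrite phiE // (negbTE nh) muln0 mul0r.
have : (count_mem i s)%:R * #|H|%:R = (rf_dim R i * #|G|)%:R :> algC.
  by rewrite -e1 e2 natrM; field; exact: neq0CG.
by move/eqP; rewrite -natrM eqr_nat => /eqP.
Qed.

End Orbit.

Section Schur.
Local Open Scope ring_scope.
Variables (gT : finGroupType) (H : {group gT}) (R : rep_family H).
Hypothesis cR : complete_irr_set R.

Lemma schur2 u v (M : 'M[algC]_(rf_dim R u, rf_dim R v)) :
  (forall h, h \in H -> rf_rep R u h *m M = M *m rf_rep R v h) ->
  M != 0 -> u = v.
Proof.
case: cR => irrR inR _ hM nzM.
have /mx_irrP [_ irrv] := irrR v.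
have /mx_irrP [_ irru] := irrR u.
have fullM : row_full M.
  have modM : mxmodule (rf_rep R v) <<M>>%MS.
    rewrite (eqmx_module _ (genmxE M)); apply/mxmoduleP => h hH.
    by rewrite -hM // submxMl.
  have := irrv _ modM; rewrite (eqmx_eq0 (genmxE M)) => /(_ nzM).
  by rewrite /row_full genmxE.
have freeM : row_free M.
  rewrite -kermx_eq0; apply/negP => nzK.
  have modK : mxmodule (rf_rep R u) (kermx M).
    apply/mxmoduleP => h hH; apply/sub_kermxP.
    by rewrite -mulmxA hM // mulmxA mulmx_ker mul0mx.
  have := irru _ modK (introN idP nzK); rewrite -sub1mx => /sub_kermxP.
  by rewrite mul1mx => eM; rewrite eM eqxx in nzM.
case: (eqVneq u v) => // nuv; case: (inR _ _ nuv).
exists M => //; exact: (etrans (esym (eqP freeM)) (eqP fullM)).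
Qed.

Lemma schur1 u (M : 'M[algC]_(rf_dim R u)) :
  (forall h, h \in H -> rf_rep R u h *m M = M *m rf_rep R u h) -> is_scalar_mx M.
Proof.
case: cR => irrR _ _ hM.
have abs := group_closure_closed_field (irrR u).
apply: (mx_abs_irr_cent_scalar abs); apply/centgmxP => h hH.
by rewrite hM.
Qed.

Lemma schur_nat u v (F : nat -> nat -> algC) :
  (forall h, h \in H -> forall i j, (i < rf_dim R u)%N -> (j < rf_dim R v)%N ->
    \sum_(t < rf_dim R u) nat_entry (rf_rep R u h) i t * F t j =
    \sum_(t < rf_dim R v) F i t * nat_entry (rf_rep R v h) t j) ->
  forall i j, (i < rf_dim R u)%N -> (j < rf_dim R v)%N -> F i j != 0 ->
  u = v /\ i = j.
Proof.
move=> hF i j hi hj nz.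
pose M : 'M[algC]_(rf_dim R u, rf_dim R v) := \matrix_(a, b) F a b.
have hM : forall h, h \in H -> rf_rep R u h *m M = M *m rf_rep R v h.
  move=> h hH; apply/matrixP => a b; rewrite !mxE.
  have := hF h hH a b (ltn_ord a) (ltn_ord b).
  under eq_bigr do rewrite nat_entry_ord.
  under [in X in _ = X -> _]eq_bigr do rewrite nat_entry_ord.
  move=> e; rewrite /M; under eq_bigr do rewrite mxE.
  by under [RHS]eq_bigr do rewrite mxE.
have nzM : M != 0.
  apply/negP => /eqP M0; move/matrixP: M0 => /(_ (Ordinal hi) (Ordinal hj)).
  by rewrite /M !mxE => e; rewrite e eqxx in nz.
have uv := schur2 hM nzM; subst v; split => //.
have /is_scalar_mxP [c ec] := schur1 hM.
move/matrixP: ec => /(_ (Ordinal hi) (Ordinal hj)); rewrite !mxE => e.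
apply/eqP; apply: contraNT nz => nij.
by rewrite e (_ : (Ordinal hi == Ordinal hj) = false) ?mulr0n //; apply/negbTE.
Qed.

Lemma block_schur s s' (T : nat -> nat -> algC) :
  (forall h, h \in H -> forall a b, (a < blk_start R s (size s))%N ->
     (b < blk_start R s' (size s'))%N ->
   \sum_(c < blk_start R s (size s)) blockdiag_entry R s h a c * T c b =
   \sum_(c < blk_start R s' (size s')) T a c * blockdiag_entry R s' h c b) ->
  forall (p : 'I_(size s)) (q : 'I_(size s')) al be,
   (al < rf_dim R (tnth (in_tuple s) p))%N -> (be < rf_dim R (tnth (in_tuple s') q))%N ->
   T (blk_start R s p + al) (blk_start R s' q + be) != 0 ->
   tnth (in_tuple s) p = tnth (in_tuple s') q /\ al = be.
Proof.
move=> hT p q al be hal hbe nz.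
apply: (@schur_nat _ _ (fun i j => T (blk_start R s p + i) (blk_start R s' q + j))) => //.
move=> h hH i j hi hj.
have := hT h hH _ _ (st_lt hi) (st_lt hj).
rewrite (@row_block _ _ _ s h p i (fun c => T c (blk_start R s' q + j)) hi) (@col_block _ _ _ s' h q j (fun c => T (blk_start R s p + i) c) hj).
by [].
Qed.

End Schur.

Lemma mx_col_entry n (A : 'M[algC]_n) (B : 'M[algC]_n) i j :
  ((A *m col j B) i 0 = (A *m B) i j)%R.
Proof. by rewrite !mxE; apply: eq_bigr => y _; rewrite !mxE. Qed.

Lemma sum_count (T : finType) (s : seq T) (F : T -> nat) :
  (\sum_(t <- s) F t = \sum_i count_mem i s * F i)%N.
Proof.
elim: s => [|x s IH]; first by rewrite big_nil big1 // => i _; rewrite mul0n.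
rewrite big_cons IH.
rewrite [RHS](eq_bigr (fun i => (x == i) * F i + count_mem i s * F i)%N); last first.
  by move=> i _; rewrite /= mulnDl.
rewrite big_split /= [X in (_ = X + _)%N](bigD1 x) //= eqxx mul1n [X in (_ = _ + X + _)%N]big1 ?addn0 // => i nix.
by rewrite eq_sym (negbTE nix).
Qed.

Lemma card_count (I : eqType) (s : seq I) u :
  #|[set p : 'I_(size s) | tnth (in_tuple s) p == u]| = count_mem u s.
Proof.
transitivity (\sum_(p < size s) (tnth (in_tuple s) p == u : nat))%N.
  rewrite -sum1_card big_mkcond /=; apply: eq_bigr => p _; rewrite inE.
  by case: (_ == _).
rewrite -(big_tnth 0%N addn s xpredT (fun t => (t == u : nat))) -sum1_count [RHS]big_mkcond /=.
by apply: eq_bigr => t _; case: (t == u).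
Qed.

Section Column.
Local Open Scope ring_scope.
Variables (gT : finGroupType) (B B' : 'M[algC]_#|{: gT}|) (G H : {group gT}) (x1 : gT).
Hypotheses (uB : B \in unitmx) (hB : forall k, exists x, col_in (G :* x)%g B k).
Hypotheses (uB' : B' \in unitmx) (hB' : forall k, exists x, col_in (H :* x)%g B' k).
Hypothesis HG : H \subset G.
Local Notation W := (G :* x1)%g.
Local Notation K := [set k | col_in W B k].
Local Notation Z := (H :* x1)%g.
Local Notation K' := [set k | col_in Z B' k].
Local Notation iB := (invmx B).
Local Notation C := (invmx B *m B').
Variables (R : rep_family H) (s s' : seq 'I_(rf_num R)).
Hypothesis cR : complete_irr_set R.
Hypothesis hs : (\sum_(t <- s) rf_dim R t)%N = #|K|.
Hypothesis hsa : forall h, h \in H -> forall k : 'I_#|K|,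
  perm_act h *m col (enum_val k) B =
  \sum_(l < #|K|) blockdiag_entry R s h l k *: col (enum_val l) B.
Hypothesis hs' : (\sum_(t <- s') rf_dim R t)%N = #|K'|.
Hypothesis hsa' : forall h, h \in H -> forall k : 'I_#|K'|,
  perm_act h *m col (enum_val k) B' =
  \sum_(l < #|K'|) blockdiag_entry R s' h l k *: col (enum_val l) B'.

Lemma ZW y : y \in Z -> y \in W.
Proof. by apply/subsetP; rewrite rcosetS. Qed.

Lemma intertw h (hH : h \in H) (a : 'I_#|K|) (b : 'I_#|K'|) :
  \sum_(c < #|K|) blockdiag_entry R s h a c * C (enum_val c) (enum_val b) =
  \sum_(c < #|K'|) C (enum_val a) (enum_val c) * blockdiag_entry R s' h c b.
Proof.
set v := col (enum_val b) B'.
have sv : forall y, v y 0 != 0 -> enum_val y \in W.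
  move=> y; rewrite mxE => nz; apply: ZW.
  have := enum_valP b; rewrite inE => /col_inP; exact.
have e1 : perm_act h *m v = \sum_(c < #|K|)
    (\sum_(c' < #|K|) blockdiag_entry R s h c c' * (iB *m v) (enum_val c') 0)
      *: col (enum_val c) B.
  rewrite {1}(expand uB hB sv) mulmx_sumr.
  under eq_bigr do rewrite -scalemxAr hsa // scaler_sumr.
  rewrite exchange_big /=; apply: eq_bigr => c _; rewrite scaler_suml.
  by apply: eq_bigr => c' _; rewrite scalerA mulrC.
have e2 := hsa' hH b; rewrite -/v in e2.
have := congr1 (fun w => (iB *m w) (enum_val a) 0) e1.
rewrite /= extract // e2 mulmx_sumr summxE.
rewrite (_ : \sum_(c < #|K|) blockdiag_entry R s h a c * C (enum_val c) (enum_val b) =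
   \sum_(c < #|K|) blockdiag_entry R s h a c * (iB *m v) (enum_val c) 0); last first.
  by apply: eq_bigr => c _; rewrite /v mx_col_entry.
move=> <-; apply: eq_bigr => c _; by rewrite -scalemxAr mxE mx_col_entry mulrC.
Qed.

Lemma C_out k l : l \in K' -> k \notin K -> C k l = 0.
Proof.
move=> lK nk; have [x cx] := hB k.
rewrite mxE big1 // => y _.
case: (eqVneq (B' y l) 0) => [->|nz]; first by rewrite mulr0.
have yZ : enum_val y \in Z by move: lK; rewrite inE => /col_inP; apply.
have yW := ZW yZ.
rewrite (iB_out (x0 := x) uB hB (k := k) (y := y)) ?mul0r //; first by rewrite inE.
apply/negP => yx; case/negP: nk; rewrite inE.
by have <- : (G :* x)%g = W by rewrite -(rcoset_eqP yx) (rcoset_eqP yW).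
Qed.

Lemma count_idx u : count_mem u s = (rf_dim R u * #|G : H|%g)%N.
Proof.
have := count_K uB hB hs hsa cR u.
rewrite -(Lagrange HG) mulnCA => /eqP; rewrite [X in X == _]mulnC.
by rewrite eqn_pmul2l ?cardG_gt0 // => /eqP.
Qed.

Lemma col_count (b : 'I_#|K'|) (q : 'I_(size s')) be :
  (be < rf_dim R (tnth (in_tuple s') q))%N -> val b = (blk_start R s' q + be)%N ->
  (#|[set k | C k (enum_val b) != 0%R]| <= count_mem (tnth (in_tuple s') q) s)%N.
Proof.
move=> hbe eb.
pose k0 := enum_rank (1%g : gT).
pose T a b := C (nth k0 (enum K) a) (nth k0 (enum K') b).
pose F (p : 'I_(size s)) := nth k0 (enum K) (blk_start R s p + be).
pose P := [set p : 'I_(size s) | tnth (in_tuple s) p == tnth (in_tuple s') q].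
have hT : forall h, h \in H -> forall a b, (a < blk_start R s (size s))%N ->
     (b < blk_start R s' (size s'))%N ->
   \sum_(c < blk_start R s (size s)) blockdiag_entry R s h a c * T c b =
   \sum_(c < blk_start R s' (size s')) T a c * blockdiag_entry R s' h c b.
  move=> h hH a' b'; rewrite !st_size hs hs' => ha' hb'.
  rewrite /T (_ : nth k0 (enum K') b' = enum_val (Ordinal hb')); last by rewrite (enum_val_nth k0).
  rewrite (_ : nth k0 (enum K) a' = enum_val (Ordinal ha')); last by rewrite (enum_val_nth k0).
  under eq_bigr do rewrite -(enum_val_nth k0).
  under [RHS]eq_bigr do rewrite -(enum_val_nth k0).
  exact: (intertw hH (Ordinal ha') (Ordinal hb')).
have sub : [set k | C k (enum_val b) != 0] \subset F @: P.
  apply/subsetP => k; rewrite inE => nz.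
  have kK : k \in K.
    apply/negPn/negP => nK; by rewrite C_out ?enum_valP ?eqxx in nz.
  set a := enum_rank_in kK k.
  have ek : enum_val a = k := enum_rankK_in kK kK.
  have ha : (a < blk_start R s (size s))%N by rewrite st_size hs ltn_ord.
  have [p [al hal ea]] := blk_exists ha.
  have nzT : T (blk_start R s p + al)%N (blk_start R s' q + be)%N != 0.
    by rewrite /T -ea -eb -!(enum_val_nth k0) ek.
  have [eu eal] := block_schur cR hT hal hbe nzT.
  apply/imsetP; exists p; first by rewrite inE eu.
  by rewrite /F -eal -ea -(enum_val_nth k0) ek.
apply: leq_trans (subset_leq_card sub) _; rewrite -card_count.
exact: leq_imset_card.
Qed.

Lemma count'_eq i : count_mem i s' = rf_dim R i.
Proof.
have := count_K uB' hB' hs' hsa' cR i.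
by move/eqP; rewrite eqn_pmul2r ?cardG_gt0 // => /eqP.
Qed.

Lemma Z_bound :
  (\sum_(l in K') #|[set k | C k l != 0%R]| <= #|G : H|%g * d3 R)%N.
Proof.
pose k0 := enum_rank (1%g : gT).
pose f (n : nat) := #|[set k | C k (nth k0 (enum K') n) != 0%R]|.
rewrite big_enum_val /=.
rewrite (_ : (\sum_(b < #|K'|) #|[set k | C k (enum_val b) != 0%R]|)%N =
             (\sum_(b < #|K'|) f b)%N); last first.
  by apply: eq_bigr => b _; rewrite /f -(enum_val_nth k0).
rewrite -hs' -st_size (@sum_blocks _ _ _ s' _ 0%N addn f).
apply: (@leq_trans (\sum_(q < size s') \sum_(be < rf_dim R (tnth (in_tuple s') q))
                     count_mem (tnth (in_tuple s') q) s)%N).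
  apply: leq_sum => q _; apply: leq_sum => be _.
  have hb : (blk_start R s' q + be < #|K'|)%N by rewrite -hs' -st_size st_lt.
  have := col_count (b := Ordinal hb) (ltn_ord be) erefl.
  by rewrite /f (enum_val_nth k0).
rewrite (eq_bigr (fun q => rf_dim R (tnth (in_tuple s') q) ^ 2 * #|G : H|%g)%N); last first.
  move=> q _; rewrite sum_nat_const card_ord count_idx.
  by rewrite mulnA mulnn.
rewrite -big_distrl /= mulnC leq_mul2l; apply/orP; right.
rewrite -(big_tnth 0%N addn s' xpredT (fun t => rf_dim R t ^ 2)%N) /= sum_count.
rewrite /d3; apply/eq_leq/eq_bigr => i _.
by rewrite count'_eq -expnS.
Qed.

End Column.

Lemma card_set_sum (T : finType) (P : pred T) : #|[set j | P j]| = (\sum_j (P j : nat))%N.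
Proof.
rewrite -sum1_card big_mkcond /=; apply: eq_bigr => j _; rewrite inE.
by case: (P j).
Qed.

Lemma col_nz (n : nat) (B : 'M[algC]_n) l : B \in unitmx -> exists y, B y l != 0%R.
Proof.
move=> uB; case: (boolP [exists y, B y l != 0%R]) => [/existsP//|].
rewrite negb_exists => /forallP hz.
have : ((invmx B *m B) l l = 1)%R by rewrite mulVmx // mxE eqxx.
rewrite mxE big1 => [/eqP|y _]; first by rewrite eq_sym oner_eq0.
by have := hz y; rewrite negbK => /eqP ->; rewrite GRing.mulr0.
Qed.

Lemma row_nz (n : nat) (B : 'M[algC]_n) l : B \in unitmx -> exists y, B l y != 0%R.
Proof.
move=> uB; case: (boolP [exists y, B l y != 0%R]) => [/existsP//|].
rewrite negb_exists => /forallP hz.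
have : ((B *m invmx B) l l = 1)%R by rewrite mulmxV // mxE eqxx.
rewrite mxE big1 => [/eqP|y _]; first by rewrite eq_sym oner_eq0.
by have := hz y; rewrite negbK => /eqP ->; rewrite GRing.mul0r.
Qed.

Section Global.
Variables (gT : finGroupType) (B B' : 'M[algC]_#|{: gT}|) (G H : {group gT}).
Variable (R : rep_family H).
Hypotheses (uB : B \in unitmx) (hB : forall k, exists x, col_in (G :* x)%g B k).
Hypotheses (uB' : B' \in unitmx) (hB' : forall k, exists x, col_in (H :* x)%g B' k).
Hypothesis HG : H \subset G.
Hypothesis cR : complete_irr_set R.
Hypothesis saB : forall x, exists s : seq 'I_(rf_num R),
  (\sum_(t <- s) rf_dim R t)%N = #|[set k | col_in (G :* x)%g B k]| /\
  forall h, h \in H -> forall k : 'I_#|[set k | col_in (G :* x)%g B k]|,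
  (perm_act h *m col (enum_val k) B =
  \sum_(l < #|[set k | col_in (G :* x)%g B k]|) blockdiag_entry R s h l k *: col (enum_val l) B)%R.
Hypothesis saB' : forall x, exists s : seq 'I_(rf_num R),
  (\sum_(t <- s) rf_dim R t)%N = #|[set k | col_in (H :* x)%g B' k]| /\
  forall h, h \in H -> forall k : 'I_#|[set k | col_in (H :* x)%g B' k]|,
  (perm_act h *m col (enum_val k) B' =
  \sum_(l < #|[set k | col_in (H :* x)%g B' k]|) blockdiag_entry R s h l k *: col (enum_val l) B')%R.

Let C := (invmx B *m B')%R.
Let k0 := enum_rank (1%g : gT).
Let orb (l : 'I_#|{: gT}|) : {set gT} :=
  (H :* enum_val (odflt k0 [pick y | B' y l != 0%R]))%g.

Lemma orbE l x1 : (orb l == (H :* x1)%g) = col_in (H :* x1)%g B' l.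
Proof.
rewrite /orb; case: pickP => [y nz|hz]; last first.
  by have [y nz] := col_nz l uB'; rewrite hz in nz.
have [x cx] := hB' l; have yx := col_inP _ _ _ cx y nz.
apply/eqP/idP => [e|c1]; first by rewrite -e (rcoset_eqP yx).
by apply/rcoset_eqP; exact: col_inP _ _ _ c1 y nz.
Qed.

Lemma nnz_bound :
  (\sum_i nnz_row C i <= #|[set: gT] : H|%g * (#|G : H|%g * d3 R))%N.
Proof.
rewrite /nnz_row; under eq_bigr do rewrite card_set_sum.
rewrite exchange_big /=.
under eq_bigr do rewrite -card_set_sum.
rewrite (partition_big orb (fun Z => Z \in rcosets H [set: gT])) /=; last first.
  by move=> l _; rewrite mem_rcosets -[X in X \in _](mul1g) mem_mulg ?group1 ?inE.
rewrite -sum_nat_const; apply: leq_sum => Z /rcosetsP [x1 _ ->].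
have [s [hs hsa]] := saB x1; have [s' [hs' hsa']] := saB' x1.
apply: leq_trans (Z_bound uB hB uB' hB' HG cR hs hsa hs' hsa').
rewrite big_mkcond [X in (_ <= X)%N]big_mkcond /=; apply/eq_leq/eq_bigr => l _.
by rewrite orbE inE.
Qed.

End Global.

Lemma cost_lt (n : nat) (C : 'M[algC]_n) (i0 : 'I_n) :
  C \in unitmx -> (sparse_mv_cost C < 2 * \sum_i nnz_row C i)%N.
Proof.
move=> uC; have [y nz] := row_nz i0 uC.
have pos : (0 < nnz_row C i0)%N by rewrite /nnz_row card_gt0; apply/set0Pn; exists y; rewrite inE.
rewrite /sparse_mv_cost (bigD1 i0) //= [X in (_ < 2 * X)%N](bigD1 i0) //=.
have : (\sum_(i | i != i0) (nnz_row C i + (nnz_row C i).-1) <=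
        2 * \sum_(i | i != i0) nnz_row C i)%N.
  rewrite big_distrr /=; apply: leq_sum => i _.
  case: (nnz_row C i) => [|r] //=; lia.
move=> hS; rewrite mulnDr -addSn; apply: leq_add => //.
by rewrite -addnS prednK // mul2n addnn.
Qed.

Lemma ltn_sum_nat (m n : nat) (a b : nat -> nat) : (m < n)%N ->
  (forall j, (m <= j < n)%N -> (a j < b j)%N) ->
  (\sum_(m <= j < n) a j < \sum_(m <= j < n) b j)%N.
Proof.
move=> mn h; rewrite !(big_ltn (m := m) (n := n)) //.
have h1 : (a m < b m)%N by apply: h; rewrite leqnn mn.
have h2 : (\sum_(m.+1 <= j < n) a j <= \sum_(m.+1 <= j < n) b j)%N.
  rewrite big_nat_cond [X in (_ <= X)%N]big_nat_cond; apply: leq_sum => j /andP[/andP[j1 j2] _].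
  by apply: ltnW; apply: h; rewrite j2 ltnW.
by rewrite -addSn leq_add.
Qed.

Lemma idx_chain (gT : finGroupType) (n : nat) (Gs : nat -> {group gT}) :
  Gs n = [set: gT] :> {set gT} ->
  (forall j, (1 < j <= n)%N -> Gs j.-1 \proper Gs j) ->
  forall j, (1 <= j <= n)%N ->
  #|[set: gT] : Gs j|%g = (\prod_(j.+1 <= k < n.+1) #|Gs k : Gs k.-1|%g)%N.
Proof.
move=> hGn hprop.
suff : forall d j, n - j = d -> (1 <= j <= n)%N ->
  #|[set: gT] : Gs j|%g = (\prod_(j.+1 <= k < n.+1) #|Gs k : Gs k.-1|%g)%N.
  by move=> h j hj; exact: h.
elim=> [|d IH] j hd /andP[j1 jn].
  have ejn : j = n by lia.
  subst j; rewrite big_geq // hGn.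
  exact: (indexgg [set: gT]%G).
have jn' : (j < n)%N by lia.
rewrite big_ltn; last lia.
have hd' : n - j.+1 = d by lia.
have hj' : (1 <= j.+1 <= n)%N by apply/andP; split; lia.
rewrite -(IH j.+1 hd' hj') /=.
rewrite mulnC; symmetry; apply: (Lagrange_index (G := [set: gT]%G)).
  exact: subsetT.
by apply: proper_sub; apply: (hprop j.+1); lia.
Qed.
Unset Implicit Arguments.

Theorem theorem6 (gT : finGroupType) (n : nat) (Gs : nat -> {group gT})
  (Rs : forall j, rep_family (Gs j)) (Bs : nat -> 'M[algC]_#|{: gT}|) :
  (1 < n)%N ->
  Gs 1%N = 1%G :> {set gT} ->
  Gs n = [set: gT] :> {set gT} ->
  (forall j, (1 < j <= n)%N -> Gs j.-1 \proper Gs j) ->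
  (forall j, (1 <= j <= n)%N -> complete_irr_set (Rs j)) ->
  (* compatibility of R(G_1), ..., R(G_n) with respect to CX *)
  (exists B : 'M[algC]_#|{: gT}|, B \in unitmx /\
     forall j, (1 <= j <= n)%N -> sym_adapted (Rs j) (fun k => col k B)) ->
  Bs 1%N = (1%:M)%R ->
  (forall j, (1 <= j <= n)%N -> orbital_sa Rs j (Bs j)) ->
  (\sum_(2 <= j < n.+1) sparse_mv_cost (change_basis (Bs j) (Bs j.-1))
   < 2 * \sum_(2 <= j < n.+1)
           #|Gs j : Gs j.-1|%g ^ 2 * (\prod_(j.+1 <= k < n.+1) #|Gs k : Gs k.-1|%g)
           * d3 (Rs j.-1))%N.
Proof.
move=> n1 _ hGn hprop hcomp _ _ horb.
rewrite big_distrr /=; apply: ltn_sum_nat => [|j /andP[j2 jn]]; first lia.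
have jn' : (j <= n)%N by lia.
have hj : (1 <= j <= n)%N by apply/andP; split; lia.
have hj1 : (1 <= j.-1 <= n)%N by apply/andP; split; lia.
have hjj : (1 <= j.-1 <= j)%N by apply/andP; split; lia.
have [uB hB saj] := horb j hj.
have [uB' hB' saj'] := horb j.-1 hj1.
have HG : Gs j.-1 \subset Gs j by apply: proper_sub; apply: hprop; apply/andP; split; lia.
have cR := hcomp j.-1 hj1.
have saB : forall x, exists s : seq 'I_(rf_num (Rs j.-1)),
  (\sum_(t <- s) rf_dim (Rs j.-1) t)%N = #|[set k | col_in (Gs j :* x)%g (Bs j) k]| /\
  forall h, h \in Gs j.-1 -> forall k : 'I_#|[set k | col_in (Gs j :* x)%g (Bs j) k]|,
  (perm_act h *m col (enum_val k) (Bs j) =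
  \sum_(l < #|[set k | col_in (Gs j :* x)%g (Bs j) k]|)
     blockdiag_entry (Rs j.-1) s h l k *: col (enum_val l) (Bs j))%R.
  by move=> x; have [s [hs hsa]] := saj x j.-1 hjj; exists s; split.
have saB' : forall x, exists s : seq 'I_(rf_num (Rs j.-1)),
  (\sum_(t <- s) rf_dim (Rs j.-1) t)%N = #|[set k | col_in (Gs j.-1 :* x)%g (Bs j.-1) k]| /\
  forall h, h \in Gs j.-1 -> forall k : 'I_#|[set k | col_in (Gs j.-1 :* x)%g (Bs j.-1) k]|,
  (perm_act h *m col (enum_val k) (Bs j.-1) =
  \sum_(l < #|[set k | col_in (Gs j.-1 :* x)%g (Bs j.-1) k]|)
     blockdiag_entry (Rs j.-1) s h l k *: col (enum_val l) (Bs j.-1))%R.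
  have hjj' : (1 <= j.-1 <= j.-1)%N by apply/andP; split; lia.
  by move=> x; have [s [hs hsa]] := saj' x j.-1 hjj'; exists s; split.
have nb := nnz_bound uB hB uB' hB' HG cR saB saB'.
have uC : (change_basis (Bs j) (Bs j.-1) \in unitmx).
  by rewrite /change_basis unitmx_mul unitmx_inv uB uB'.
have cl := cost_lt (enum_rank (1%g : gT)) uC.
have ic := idx_chain hGn hprop hj1.
have ej : j.-1.+1 = j by lia.
rewrite ej big_ltn in ic; last lia.
rewrite ic in nb.
apply: (leq_trans cl); rewrite leq_mul2l /=.
apply: (leq_trans nb); apply: eq_leq.
rewrite /change_basis; ring.
Qed.
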